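(* Let $X^{(n)}=\{X_1,\dots,X_n\}\subset\mathbb{R}^d$ and $u^{(n)}=\{u_1,\dots,u_n\}\subset\mathbb{R}^d$, and let $\hat T$ be a solution of the discrete optimal transport problem from $u^{(n)}$ to $X^{(n)}$. Then for every $i$, $$\mathrm{BP}(\hat T(u_i))\in[\mathrm{TD}^-(u_i;u^{(n)}),\ \mathrm{TD}(u_i;u^{(n)})].$$
   Context: An empirical optimal transport map $\hat T_{Z^{(n)}}$ from $u^{(n)}$ to a set $Z^{(n)}$ of $n$ points is any bijection $T:u^{(n)}\to Z^{(n)}$ minimizing $\frac1n\sum_{i=1}^n\|T(u_i)-u_i\|^2$; $\hat T=\hat T_{X^{(n)}}$. $\mathcal{Q}_{\ell,n}$ is the set of all sets $Z^{(n)}$ of $n$ points of $\mathbb{R}^d$ sharing exactly $n-\ell$ elements with $X^{(n)}$, and $\mathrm{BP}(\hat T(u_i))=\frac1n\min\{\ell\in\{1,\dots,n\}:\sup_{Z^{(n)}\in\mathcal{Q}_{\ell,n}}\|\hat T(u_i)-\hat T_{Z^{(n)}}(u_i)\|=\infty\}$. Tukey depth: $\mathrm{TD}(u;u^{(n)})=\min_{v\in\mathcal{S}^{d-1}}\frac1n\sum_{j}\mathbf{1}(\langle v,u_j-u\rangle\geq0)$. Lower Tukey depth: $\mathrm{TD}^-(u;u^{(n)})=\frac{n+1}{n}-\max_{v\in\mathcal{S}^{d-1}}\frac1n\sum_j\mathbf{1}(\langle v,u_j-u\rangle\geq0)$. *)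

(* Defs.v *)
From HB Require Import structures.
From mathcomp Require Import all_boot all_order all_algebra all_fingroup.
From mathcomp Require Import all_classical all_reals.
Set Implicit Arguments. Unset Strict Implicit. Unset Printing Implicit Defensive.
Import Order.TTheory GRing.Theory Num.Theory.
Local Open Scope ring_scope.
Local Open Scope classical_set_scope.

Section Defs.
Variables (R : realType) (d n : nat).
Notation vec := 'rV[R]_d.

Definition dotp (v w : vec) : R := \sum_(k < d) v 0 k * w 0 k.
Definition sqnorm (v : vec) : R := dotp v v.
Definition enorm (v : vec) : R := Num.sqrt (sqnorm v).

(* A bijection u^(n) -> Z^(n) is encoded by a permutation s : u_k |-> Z_(s k).
   It is an empirical optimal transport map iff it minimizes the mean
   squared displacement among all bijections. *)
Definition ot_cost (u Z : 'I_n -> vec) (s : 'S_n) : R :=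
  n%:R^-1 * \sum_(k < n) sqnorm (Z (s k) - u k).
Definition ot_optimal (u Z : 'I_n -> vec) (s : 'S_n) : Prop :=
  forall t : 'S_n, ot_cost u Z s <= ot_cost u Z t.

Definition inQ (X : 'I_n -> vec) (l : nat) (Z : 'I_n -> vec) : Prop :=
  injective Z /\ #|[set j : 'I_n | [exists k : 'I_n, Z j == X k]]| = (n - l)%N.

(* sup_{Z in Q_{l,n}} || T^(u_i) - T^_Z(u_i) || = +oo, where T^ = s_hat
   (an optimal map for X) and T^_Z = sel Z (an optimal map for Z). *)
Definition breaks (u X : 'I_n -> vec) (s_hat : 'S_n)
    (sel : ('I_n -> vec) -> 'S_n) (i : 'I_n) (l : nat) : Prop :=
  forall M : R, exists Z, inQ X l Z /\ M < enorm (X (s_hat i) - Z (sel Z i)).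

Definition BP (u X : 'I_n -> vec) (s_hat : 'S_n)
    (sel : ('I_n -> vec) -> 'S_n) (i : 'I_n) : R :=
  inf [set (l%:R / n%:R : R) | l in
        [set l : nat | (1 <= l <= n)%N /\ breaks u X s_hat sel i l]].

Definition hcount (u : 'I_n -> vec) (x v : vec) : nat :=
  #|[set j : 'I_n | 0 <= dotp v (u j - x)]|.

Definition sphere : set vec := [set v | enorm v = 1].

Definition TD (u : 'I_n -> vec) (x : vec) : R :=
  inf [set ((hcount u x v)%:R / n%:R : R) | v in sphere].

Definition TDm (u : 'I_n -> vec) (x : vec) : R :=
  (n.+1)%:R / n%:R - sup [set ((hcount u x v)%:R / n%:R : R) | v in sphere].

End Defs.

(* Main.v *)
Require Import Defs.
From HB Require Import structures.
From mathcomp Require Import all_boot all_order all_algebra all_fingroup.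
From mathcomp Require Import all_classical all_reals.
From mathcomp Require Import topology normedtype sequences matrix_normedtype.
From mathcomp Require Import ring lra.
Import Order.TTheory GRing.Theory Num.Theory.
Import numFieldTopology.Exports numFieldNormedType.Exports.
Set Implicit Arguments. Unset Strict Implicit. Unset Printing Implicit Defensive.
Local Open Scope ring_scope.
Lemma dotpC (R : realType) d (v w : 'rV[R]_d) : dotp v w = dotp w v.
Proof. by rewrite /dotp; apply: eq_bigr => k _; rewrite mulrC. Qed.

Lemma dotpDr (R : realType) d (v w1 w2 : 'rV[R]_d) :
  dotp v (w1 + w2) = dotp v w1 + dotp v w2.
Proof. by rewrite /dotp -big_split; apply: eq_bigr => k _; rewrite mxE mulrDr. Qed.

Lemma dotpZr (R : realType) d (c : R) (v w : 'rV[R]_d) :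
  dotp v (c *: w) = c * dotp v w.
Proof.
rewrite /dotp mulr_sumr; apply: eq_bigr => k _; rewrite mxE.
by rewrite mulrA (mulrC _ c) mulrA.
Qed.

Lemma dotpNr (R : realType) d (v w : 'rV[R]_d) : dotp v (- w) = - dotp v w.
Proof. by rewrite -scaleN1r dotpZr mulN1r. Qed.

Lemma dotpBr (R : realType) d (v w1 w2 : 'rV[R]_d) :
  dotp v (w1 - w2) = dotp v w1 - dotp v w2.
Proof. by rewrite dotpDr dotpNr. Qed.

Lemma dotpDl (R : realType) d (v w1 w2 : 'rV[R]_d) :
  dotp (w1 + w2) v = dotp w1 v + dotp w2 v.
Proof. by rewrite dotpC dotpDr !(dotpC v). Qed.

Lemma dotpBl (R : realType) d (v w1 w2 : 'rV[R]_d) :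
  dotp (w1 - w2) v = dotp w1 v - dotp w2 v.
Proof. by rewrite dotpC dotpBr !(dotpC v). Qed.

Lemma dotpZl (R : realType) d (c : R) (v w : 'rV[R]_d) :
  dotp (c *: w) v = c * dotp w v.
Proof. by rewrite dotpC dotpZr dotpC. Qed.

Lemma dotp0r (R : realType) d (v : 'rV[R]_d) : dotp v 0 = 0.
Proof. by rewrite /dotp big1 // => k _; rewrite mxE mulr0. Qed.

Lemma sqnormB (R : realType) d (a b : 'rV[R]_d) :
  sqnorm (a - b) = sqnorm a + sqnorm b - 2 * dotp a b.
Proof.
rewrite /sqnorm dotpBl !dotpBr (dotpC b a); ring.
Qed.

Lemma mono_pair (R : realType) d n (u Z : 'I_n -> 'rV[R]_d) (s : 'S_n)
  (hs : ot_optimal u Z s) (j k : 'I_n) :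
  0 <= dotp (u j - u k) (Z (s j) - Z (s k)).
Proof.
have [->|njk] := eqVneq j k; first by rewrite !subrr dotp0r.
have n0 : (0 < n)%N by apply: (leq_ltn_trans (leq0n j)); exact: ltn_ord.
have H := hs (tperm j k * s)%g; move: H; rewrite /ot_cost.
rewrite ler_pM2l ?invr_gt0 ?ltr0n // => H.
have E2 : forall f : 'I_n -> R, \sum_x f x = f j + f k + \sum_(x | (x != j) && (x != k)) f x.
  move=> f; rewrite (bigD1 j) //= (bigD1 k) /=; last by rewrite eq_sym.
  by rewrite addrA; congr (_ + _ + _); apply: eq_bigl => x; rewrite andbC.
move: H; rewrite !E2 !permM tpermL tpermR.
rewrite [X in _ <= _ + X](eq_bigr (fun x => sqnorm (Z (s x) - u x))); last first.
  by move=> x /andP [xj xk]; rewrite permM tpermD // eq_sym.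
rewrite lerD2r !sqnormB => H.
have : 0 <= 2 * dotp (u j - u k) (Z (s j) - Z (s k)).
  rewrite dotpBl !dotpBr; rewrite !(dotpC (u _)); lra.
by rewrite pmulr_rge0.
Qed.

Lemma coord_le (R : realType) d (v : 'rV[R]_d) (k : 'I_d) : `|v 0 k| <= `|v|.
Proof.
have -> : `|v| = mx_norm v by [].
rewrite mx_normrE; apply/bigmax_geP; right => /=.
by exists (0, k).
Qed.

Definition l1 (R : realType) d (a : 'rV[R]_d) : R := \sum_k `|a 0 k|.

Lemma l1_ge0 (R : realType) d (a : 'rV[R]_d) : 0 <= l1 a.
Proof. by apply: sumr_ge0 => k _. Qed.

Lemma dotp_le (R : realType) d (a b : 'rV[R]_d) : `|dotp a b| <= l1 a * `|b|.
Proof.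
rewrite /dotp /l1 mulr_suml; apply: (le_trans (ler_norm_sum _ _ _)).
apply: ler_sum => k _; rewrite normrM; apply: ler_wpM2l => //; exact: coord_le.
Qed.

Lemma sq_coord (R : realType) d (v : 'rV[R]_d) (k : 'I_d) : v 0 k ^+ 2 <= sqnorm v.
Proof.
rewrite /sqnorm /dotp (bigD1 k) //= -expr2 lerDl; apply: sumr_ge0 => x _.
by rewrite -expr2 sqr_ge0.
Qed.

Lemma sqnorm_ge0 (R : realType) d (v : 'rV[R]_d) : 0 <= sqnorm v.
Proof. by apply: sumr_ge0 => x _; rewrite -expr2 sqr_ge0. Qed.

Lemma coord_le_enorm (R : realType) d (v : 'rV[R]_d) (k : 'I_d) : `|v 0 k| <= enorm v.
Proof.
by rewrite /enorm -sqrtr_sqr ler_sqrt ?sqnorm_ge0 // sq_coord.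
Qed.

Lemma enorm_le (R : realType) d (v : 'rV[R]_d) : enorm v <= d%:R * `|v|.
Proof.
rewrite /enorm -(ger0_norm (mulr_ge0 (ler0n _ _) (normr_ge0 v))) -sqrtr_sqr.
rewrite ler_sqrt ?sqr_ge0 //.
apply: (le_trans (y := \sum_(k < d) `|v| * `|v|)).
  apply: ler_sum => k _; apply: (le_trans (ler_norm _)); rewrite normrM.
  by apply: ler_pM => //; exact: coord_le.
rewrite sumr_const card_ord -mulr_natl.
have hd : (d%:R : R) <= d%:R * d%:R.
  case: d v => [|d'] v; first by rewrite mul0r.
  by rewrite ler_peMr // ler1n.
have := normr_ge0 v; have := mulr_ge0 (normr_ge0 v) (normr_ge0 v).
set a := `|v|; set b := (d%:R : R); nra.
Qed.

Lemma pos_min (T : eqType) (R : realType) (s : seq T) (f : T -> R) :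
  (forall x, x \in s -> 0 < f x) -> exists e, 0 < e /\ forall x, x \in s -> e <= f x.
Proof.
elim: s => [|y s IH] H; first by exists 1; split => // x.
have [e [e0 He]] := IH (fun x xs => H x (mem_behead (s := y :: s) xs)).
exists (Num.min e (f y)); split.
  by rewrite lt_min e0 H // mem_head.
move=> x; rewrite inE => /orP [/eqP ->|xs]; first by rewrite ge_min lexx orbT.
by rewrite ge_min He.
Qed.

Lemma card_cset (T : finType) (P : T -> bool) :
  #|[set x | P x]%classic| = #|[set x | P x]|.
Proof.
apply: eq_card => x; rewrite inE; apply/idP/idP => [/set_mem //|H].
by apply: mem_set.
Qed.

Lemma le_sum_term (R : realType) (T : finType) (P : pred T) (f : T -> R) (x : T) :
  P x -> (forall y, P y -> 0 <= f y) -> f x <= \sum_(y | P y) f y.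
Proof.
move=> Px H; rewrite (bigD1 x) //= lerDl; apply: sumr_ge0 => y /andP [Py _].
exact: H.
Qed.

Lemma le_sum_all (R : realType) (T : finType) (f : T -> R) (x : T) :
  (forall y, 0 <= f y) -> f x <= \sum_y f y.
Proof.
move=> H; rewrite (bigD1 x) //= lerDl; apply: sumr_ge0 => y _; exact: H.
Qed.

Lemma nz_coord (R : realType) d (v : 'rV[R]_d) : enorm v = 1 -> exists k, v 0 k != 0.
Proof.
move=> hv; apply/not_existsP => /= H.
have : sqnorm v = 0.
  rewrite /sqnorm /dotp big1 // => k _.
  by have := H k; move/negP; rewrite negbK => /eqP ->; rewrite mulr0.
by move: hv; rewrite /enorm => + h0; rewrite h0 sqrtr0 => /eqP; rewrite eq_sym oner_eq0.
Qed.

Lemma breaks_half (R : realType) d n (X u : 'I_n -> 'rV[R]_d) (hX : injective X)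
  (s_hat : 'S_n) (sel : ('I_n -> 'rV[R]_d) -> 'S_n)
  (hsel : forall Z, ot_optimal u Z (sel Z)) (i : 'I_n) (v : 'rV[R]_d)
  (hv : enorm v = 1) : breaks u X s_hat sel i (hcount u (u i) v).
Proof.
have [k0 vk0] := nz_coord hv.
rewrite /hcount card_cset.
set H := [set j | 0 <= dotp v (u j - u i)] => M.
set c := `|v 0 k0|.
have c0 : 0 < c by rewrite normr_gt0.
set D := \sum_a \sum_b `|X a 0 k0 - X b 0 k0|.
have D0 : 0 <= D by apply: sumr_ge0 => a _; apply: sumr_ge0.
have Dle : forall a b, `|X a 0 k0 - X b 0 k0| <= D.
  move=> a b; rewrite /D. apply: (le_trans _ (le_sum_all (f := fun a => \sum_b `|X a 0 k0 - X b 0 k0|) a _)).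
  - by apply: (le_trans _ (le_sum_all (f := fun b => `|X a 0 k0 - X b 0 k0|) b _)).
  - by move=> y; apply: sumr_ge0.
set g := fun j => - dotp (u j - u i) v.
have g0 : forall j, j \notin H -> 0 < g j.
  by move=> j; rewrite inE -ltNge /g dotpC oppr_gt0.
set T2 := \sum_(j | j \notin H) \sum_a \sum_b `|dotp (u j - u i) (X a - X b)| / g j.
have T2ge : forall j a b, j \notin H -> `|dotp (u j - u i) (X a - X b)| / g j <= T2.
  move=> j a b jH.
  have hg := g0 j jH.
  rewrite /T2; apply: (le_trans _ (le_sum_term (P := fun j => j \notin H) (f := fun j => \sum_a \sum_b `|dotp (u j - u i) (X a - X b)| / g j) (x := j) _ _)) => //.
  - apply: (le_trans _ (le_sum_all (f := fun a => \sum_b `|dotp (u j - u i) (X a - X b)| / g j) a _)) => //.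
    + by apply: (le_trans _ (le_sum_all (f := fun b => `|dotp (u j - u i) (X a - X b)| / g j) b _)) => // y;
        rewrite divr_ge0 // ltW.
    + by move=> y; apply: sumr_ge0 => z _; rewrite divr_ge0 // ltW.
  - by move=> y yH; apply: sumr_ge0 => a' _; apply: sumr_ge0 => b' _;
      rewrite divr_ge0 // ltW // g0.
have T20 : 0 <= T2.
  by apply: sumr_ge0 => j jH; apply: sumr_ge0 => a' _; apply: sumr_ge0 => b' _;
      rewrite divr_ge0 // ltW // g0.
set t := 1 + (`|M| + D) / c + T2.
have tc : `|M| + D < t * c.
  rewrite /t 2!mulrDl mul1r divfK ?gt_eqF //.
  have := mulr_ge0 T20 (ltW c0). lra.
have t0 : 0 < t by rewrite /t; have := divr_ge0 (addr_ge0 (normr_ge0 M) D0) (ltW c0); lra.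
have F1 : forall a b, X a + t *: v != X b.
  move=> a b; apply/eqP => /(congr1 (fun w : 'rV[R]_d => w 0 k0)); rewrite !mxE => E.
  have : `|X b 0 k0 - X a 0 k0| = t * c.
    have -> : X b 0 k0 - X a 0 k0 = t * v 0 k0 by rewrite -E; ring.
    by rewrite normrM gtr0_norm.
  by have := Dle b a; have := normr_ge0 M; lra.
pose sinv := fun a => (s_hat^-1)%g a.
pose Z := fun a => if sinv a \in H then X a + t *: v else X a.
have Zinj : injective Z.
  move=> a b; rewrite /Z.
  case: ifP => ha; case: ifP => hb.
  - by move/addIr; exact: hX.
  - by move=> E; have := F1 a b; rewrite E eqxx.
  - by move=> E; have := F1 b a; rewrite E eqxx.
  - exact: hX.
exists Z; split.
  split => //.
  rewrite card_cset (_ : (n - _)%N = #|sinv @^-1: (~: H)|); last first.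
    rewrite card_preimset; last exact: perm_inj.
    change (n - #|H| = #|~: H|)%N; have E := cardsC H; rewrite card_ord in E.
    by rewrite -{1}E addKn.
  apply: eq_card => a; rewrite !inE /Z; case: ifP => ha /=.
    rewrite inE in ha; rewrite ha /=; apply/negbTE/existsP => -[k /eqP E].
    by have := F1 a k; rewrite E eqxx.
  by rewrite inE in ha; rewrite ha /=; apply/existsP; exists a.
set sg := sel Z.
have hmono := mono_pair (hsel Z).
have iH : i \in H by rewrite inE subrr dotp0r.
have si : sinv (sg i) \in H.
  apply/negPn/negP => siH.
  pose Q := [set x | sinv (sg x) \in H].
  have cQ : #|Q| = #|H|.
    rewrite -(card_preimset H (f := fun x => sinv (sg x))) //.
    by move=> x y /perm_inj /perm_inj.
  have [j jQ jH] : exists2 j, j \in Q & j \notin H.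
    case: (boolP [exists x in Q, x \notin H]) => [/exists_inP //|/exists_inPn H1].
    have sub : Q \subset H :\ i.
      apply/fintype.subsetP => x xQ; rewrite in_setD1; apply/andP; split.
        by apply/eqP => xi; move: xQ; rewrite xi inE (negbTE siH).
      by have := H1 x xQ; rewrite negbK.
    have := subset_leq_card sub; rewrite cQ (cardsD1 i H) iH.
    by rewrite add1n ltnn.
  have := hmono j i; rewrite /Z.
  move: jQ; rewrite inE => ->; rewrite (negbTE siH).
  rewrite addrAC dotpDr dotpZr -/(g j) => h.
  have hg := g0 j jH.
  have := T2ge j (sg j) (sg i) jH; rewrite ler_pdivrMr // => h2.
  have := ler_norm (dotp (u j - u i) (X (sg j) - X (sg i))).
  have : T2 * g j < t * g j by rewrite ltr_pM2r // /t; have := divr_ge0 (addr_ge0 (normr_ge0 M) D0) (ltW c0); lra.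
  rewrite /g in h h2 *; lra.
rewrite /Z si.
apply: (lt_le_trans _ (coord_le_enorm _ k0)).
rewrite !mxE.
have := Dle (s_hat i) (sg i).
have : t * c <= `|X (s_hat i) 0 k0 - (X (sg i) 0 k0 + t * v 0 k0)| + `|X (s_hat i) 0 k0 - X (sg i) 0 k0|.
  have -> : t * c = `|t * v 0 k0| by rewrite normrM (gtr0_norm t0).
  set A1 := X (s_hat i) 0 k0 - X (sg i) 0 k0.
  set A2 := X (s_hat i) 0 k0 - (X (sg i) 0 k0 + t * v 0 k0).
  have -> : t * v 0 k0 = A1 - A2 by rewrite /A1 /A2; ring.
  have := ler_normB A1 A2; lra.
have := ler_norm M; lra.
Qed.


Local Open Scope classical_set_scope.
Lemma unit_sphere_compact (R : realType) d :
  compact [set v : 'rV[R]_d | `|v| = 1].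
Proof.
apply: bounded_closed_compact.
  exists 1; split => // M hM x /= ->; exact: ltW.
have hc : continuous (fun v : 'rV[R]_d => `|v|) by move=> v; exact: norm_continuous.
have := (continuous_closedP _).1 hc [set x : R | x = 1] (@closed_eq _ 1).
by [].
Qed.

Lemma enorm_pos (R : realType) d (p : 'rV[R]_d) : p != 0 -> 0 < enorm p.
Proof.
move=> p0.
have [k pk] : exists k, p 0 k != 0.
  apply/not_existsP => H; move/eqP: p0; apply; apply/rowP => k.
  by have := H k; move/negP; rewrite negbK mxE => /eqP.
apply: (lt_le_trans _ (coord_le_enorm p k)); by rewrite normr_gt0.
Qed.

Lemma normalize (R : realType) d (p : 'rV[R]_d) : p != 0 ->
  enorm ((enorm p)^-1 *: p) = 1.
Proof.
move=> p0; have hp := enorm_pos p0.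
rewrite /enorm /sqnorm dotpZl dotpZr mulrA -expr2 exprVn.
rewrite -/(sqnorm p) -/(enorm p).
have -> : sqnorm p = enorm p ^+ 2 by rewrite /enorm sqr_sqrtr // sqnorm_ge0.
by rewrite mulVf ?sqrtr1 // expf_neq0 // gt_eqF.
Qed.

Lemma archi_nat (R : realType) (x : R) : exists m0 : nat, forall m, (m0 <= m)%N -> x < m%:R.
Proof.
exists (Num.Def.trunc x).+1 => m hm; apply: (lt_le_trans (truncnS_gt x)).
by rewrite ler_nat.
Qed.

Lemma breaks_lower (R : realType) d n (hd : (0 < d)%N) (X u : 'I_n -> 'rV[R]_d)
  (s_hat : 'S_n) (sel : ('I_n -> 'rV[R]_d) -> 'S_n)
  (hsel : forall Z, ot_optimal u Z (sel Z)) (i : 'I_n) (l : nat) (hl : (l <= n)%N) :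
  breaks u X s_hat sel i l ->
  exists v, enorm v = 1 /\ (n.+1 <= hcount u (u i) v + l)%N.
Proof.
move=> hb.
have [Zf HZ] := choice (fun m : nat => hb m%:R).
set Bx := \sum_a \sum_b enorm (X a - X b).
have Bxle : forall a b, enorm (X a - X b) <= Bx.
  move=> a b; apply: (le_trans _ (le_sum_all (f := fun a => \sum_b enorm (X a - X b)) a _)).
  - by apply: (le_trans _ (le_sum_all (f := fun b => enorm (X a - X b)) b _)) => // y;
      rewrite sqrtr_ge0.
  - by move=> y; apply: sumr_ge0 => z _; rewrite sqrtr_ge0.
have Bx0 : 0 <= Bx by apply: (le_trans _ (Bxle i i)); rewrite sqrtr_ge0.
set C := \sum_j \sum_k `|dotp (u j - u i) (X k)|.
have C0 : 0 <= C by apply: sumr_ge0 => j _; apply: sumr_ge0.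
have Cle : forall j k, dotp (u j - u i) (X k) <= C.
  move=> j k; apply: (le_trans (ler_norm _)).
  apply: (le_trans _ (le_sum_all (f := fun j => \sum_k `|dotp (u j - u i) (X k)|) j _)).
  - by apply: (le_trans _ (le_sum_all (f := fun k => `|dotp (u j - u i) (X k)|) k _)).
  - by move=> y; apply: sumr_ge0.
set K0 := `|X (s_hat i)|.
have K00 : 0 <= K0 by rewrite /K0 normr_ge0.
have dpos : (0 : R) < d%:R by rewrite ltr0n.
pose z := fun m => Zf m (sel (Zf m) i).
pose N := fun m => `|- z m|.
pose w := fun m => (N m)^-1 *: (- z m).
pose U := fun m => [set j | [exists k, Zf m (sel (Zf m) j) == X k]]%SET.
have Nb : forall m : nat, m%:R / d%:R - K0 < N m.
  move=> m; have [_ hm] := HZ m.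
  have h1 : `|X (s_hat i) - z m| <= K0 + N m by rewrite /N normrN; apply: ler_normB.
  have h3 : (m%:R : R) < d%:R * (K0 + N m).
    by apply: (lt_le_trans hm); apply: (le_trans (enorm_le _)); apply: ler_wpM2l.
  rewrite ltrBlDr ltr_pdivrMr ?ltr0n //; lra.
have Nbig : forall (y : R) (m : nat), d%:R * (K0 + y) < m%:R -> y < N m.
  move=> y m hm; apply: (le_lt_trans _ (Nb m)).
  rewrite lerBrDr ler_pdivlMr //; lra.
have zout : forall m : nat, Bx < m%:R -> forall k, z m != X k.
  move=> m hm k; apply/eqP => E; have [_ hm'] := HZ m.
  move: hm'; rewrite -/(z m) E => hm'.
  have := Bxle (s_hat i) k; lra.
have cardU : forall m, #|U m| = (n - l)%N.
  move=> m; have [[Zinj hc] _] := HZ m; rewrite -hc card_cset.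
  rewrite -(card_preimset [set j | [exists k, Zf m j == X k]]%SET (@perm_inj _ (sel (Zf m)))).
  by apply: eq_card => j; rewrite !inE.
have iU : forall m : nat, Bx < m%:R -> i \notin U m.
  move=> m hm; rewrite inE; apply/existsP => -[k /eqP E].
  by have := zout m hm k; rewrite /z E eqxx.
have dU : forall m : nat, 0 < N m -> forall j, j \in U m -> - (C / N m) <= dotp (u j - u i) (w m).
  move=> m Npos j; rewrite inE => /existsP [k /eqP E].
  have := mono_pair (hsel (Zf m)) i j; rewrite E -/(z m).
  have -> : dotp (u i - u j) (z m - X k) = - dotp (u j - u i) (z m) + dotp (u j - u i) (X k).
    by rewrite !dotpBl !dotpBr; ring.
  have := Cle j k => h1 h2.
  rewrite /w dotpZr dotpNr.
  have -> : - (C / N m) = (N m)^-1 * (- C) by rewrite mulrN mulrC.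
  rewrite ler_pM2l ?invr_gt0 //; lra.
have hF : (w @ \oo) [set v | `|v| = 1].
  have [m1 hm1] := archi_nat (d%:R * (K0 + 1)).
  exists m1 => // m /= hm.
  have Npos : 0 < N m by apply: lt_trans (Nbig 1 m (hm1 m hm)).
  by rewrite /w normrZ normfV ger0_norm ?mulVf // ?gt_eqF // ltW.
have [p [Sp clp]] := @unit_sphere_compact R d (w @ \oo) _ hF.
move: Sp => /= Sp.
pose J := [set j | dotp (u j - u i) p < 0]%SET.
have [e [e0 He]] : exists e, 0 < e /\ forall j, j \in enum J -> e <= - dotp (u j - u i) p.
  by apply: pos_min => j; rewrite mem_enum inE oppr_gt0.
set L := \sum_j l1 (u j - u i).
have L0 : 0 <= L by apply: sumr_ge0 => j _; exact: l1_ge0.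
have Lle : forall j, l1 (u j - u i) <= L.
  by move=> j; apply: (le_sum_all (f := fun j => l1 (u j - u i)) j) => y; exact: l1_ge0.
set r := e / (2 * (L + 1)).
have r0 : 0 < r by rewrite divr_gt0 //; lra.
have Lr : L * r < e / 2.
  have : r * (2 * (L + 1)) = e by rewrite /r divfK //; lra.
  lra.
have [m0 hm0] := archi_nat (Bx + d%:R * (K0 + (2 * C / e + 1))).
have hA : (w @ \oo) (w @` [set m | (m0 <= m)%N]) by exists m0 => // m /= hm; exists m.
have hB : nbhs p (ball p r) by apply: nbhsx_ballx.
have [x [[m hm <-] bx]] := clp _ _ hA hB.
have hmR := hm0 m hm.
have Ce : 0 <= 2 * C / e by rewrite divr_ge0 //; lra.
have hK : 0 <= d%:R * (K0 + (2 * C / e + 1)) by rewrite mulr_ge0 //; lra.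
have hBx : Bx < m%:R by lra.
have hN : 2 * C / e + 1 < N m by apply: Nbig; lra.
have Npos : 0 < N m by lra.
have CN : C / N m < e / 2.
  rewrite ltr_pdivrMr //.
  have : 2 * C < N m * e by rewrite -ltr_pdivrMr //; lra.
  lra.
rewrite -ball_normE /ball_ /= in bx.
have key : forall j, j \in U m -> j \notin J.
  move=> j jU; rewrite inE -leNgt leNgt; apply/negP => hlt.
  have jJ : j \in enum J by rewrite mem_enum inE.
  have h1 := He j jJ.
  have h2 := dU m Npos j jU.
  have h3 := dotp_le (u j - u i) (w m - p).
  have h4 : l1 (u j - u i) * `|w m - p| <= L * r.
    by apply: ler_pM => //; [exact: l1_ge0 | rewrite distrC ltW].
  have h5 := ler_norm (dotp (u j - u i) (w m - p)).
  rewrite dotpBr in h3 h5.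
  lra.
have sub : (i |: U m) \subset ~: J.
  apply/fintype.subsetP => j; rewrite in_setU1 => /orP [/eqP ->|jU].
    by rewrite finset.in_setC inE subrr dotpC dotp0r ltxx.
  by rewrite finset.in_setC key.
have cU : #|i |: U m| = (n - l).+1 by rewrite cardsU1 iU // cardU.
have p0 : p != 0 by apply/eqP => p0; move: Sp; rewrite p0 normr0 => /eqP; rewrite eq_sym oner_eq0.
exists ((enorm p)^-1 *: p); split; first exact: normalize.
rewrite /hcount card_cset.
have : (#|~: J| <= #|[set j | (0 <= dotp ((enorm p)^-1 *: p) (u j - u i))%R]%SET|)%N.
  apply: subset_leq_card; apply/fintype.subsetP => j; rewrite finset.in_setC !inE -leNgt => hj.
  rewrite dotpZl; apply: mulr_ge0; last by rewrite dotpC.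
  by rewrite invr_ge0; apply: ltW; exact: enorm_pos.
have := subset_leq_card sub; rewrite cU => h2 h1.
have h3 := leq_trans h2 h1.
by rewrite -(subSn hl) leq_subLR addnC in h3.
Qed.

Local Close Scope classical_set_scope.

Theorem mainTheorem3 (R : realType) (d n : nat) (hd : (0 < d)%N) (hn : (0 < n)%N)
  (X u : 'I_n -> 'rV[R]_d) (hX : injective X) (hu : injective u)
  (s_hat : 'S_n) (hopt : ot_optimal u X s_hat)
  (sel : ('I_n -> 'rV[R]_d) -> 'S_n) (hsel : forall Z, ot_optimal u Z (sel Z))
  (i : 'I_n) :
  TDm u (u i) <= BP u X s_hat sel i <= TD u (u i).
Proof.
set k0 : 'I_d := Ordinal hd.
have [v0 hv0] : exists v : 'rV[R]_d, enorm v = 1.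
  exists ((enorm (const_mx 1 : 'rV[R]_d))^-1 *: const_mx 1); apply: normalize.
  apply/eqP => /(congr1 (fun w : 'rV[R]_d => w 0 k0)); rewrite !mxE.
  by move/eqP; rewrite oner_eq0.
have hc1 : forall v, (1 <= hcount u (u i) v)%N.
  move=> v; rewrite /hcount card_cset; apply/card_gt0P; exists i.
  by rewrite inE subrr dotp0r.
have hcn : forall v, (hcount u (u i) v <= n)%N.
  by move=> v; rewrite /hcount; apply: (leq_trans (max_card _)); rewrite card_ord.
set S := [set (l%:R / n%:R : R) | l in
        [set l : nat | (1 <= l <= n)%N /\ breaks u X s_hat sel i l]]%classic.
set T := [set ((hcount u (u i) v)%:R / n%:R : R) | v in @sphere R d]%classic.
have BPE : BP u X s_hat sel i = inf S by [].
have TDE : TD u (u i) = inf T by [].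
have TDmE : TDm u (u i) = (n.+1)%:R / n%:R - sup T by [].
have q0 : 0 < (n%:R : R)^-1 by rewrite invr_gt0 ltr0n.
set q := (n%:R : R)^-1 in q0 S T BPE TDE TDmE *.
have ST : forall v, enorm v = 1 -> S ((hcount u (u i) v)%:R * q).
  move=> v hv; exists (hcount u (u i) v) => //; split; last exact: breaks_half.
  by rewrite hc1 hcn.
have S0 : (S !=set0)%classic by exists ((hcount u (u i) v0)%:R * q); exact: ST.
have Slb : has_lbound S.
  by exists 0 => y [l _ <-]; rewrite mulr_ge0 // ltW.
have Tub : has_ubound T.
  have n0 : (0:R) < n%:R by rewrite ltr0n.
  exists 1 => y [v _ <-].
  apply: (le_trans (ler_wpM2r (ltW q0) (_ : _ <= n%:R))); first by rewrite ler_nat.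
  by rewrite /q mulfV ?gt_eqF.
apply/andP; split.
  rewrite BPE TDmE; apply: lb_le_inf => // y [l [/andP [l1 ln] hb] <-].
  have [v [hv hl]] := breaks_lower hd hsel ln hb.
  have h1 : T ((hcount u (u i) v)%:R * q) by exists v.
  have h2 := ub_le_sup Tub h1.
  have h3 : ((n.+1)%:R : R) <= (hcount u (u i) v)%:R + l%:R by rewrite -natrD ler_nat.
  have h4 := ler_wpM2r (ltW q0) h3.
  lra.
rewrite BPE TDE; apply: lb_le_inf.
  by exists ((hcount u (u i) v0)%:R * q); exists v0.
move=> y [v hv <-].
exact: ge_inf Slb _ (ST v hv).
Qed.
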